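(* Let $F$ be any field. Let $u\in\mathbb{N}$ and $m,n,r\in\mathbb{N}$ with $m+n\le u$, $r\le m$ and $r\le n$. Let $s=m+n-r$ and let $x\in F^{u+1}$. Then $\operatorname{rank}(H_{m,n}(x))\le r$ if and only if $\operatorname{rank}(H_{r,s}(x))\le r$.
   Context: $\mathbb{N}=\{0,1,2,\ldots\}$. For $N\in\mathbb{N}$, $x=(x_0,\ldots,x_N)\in F^{N+1}$ and integers $p,p'\ge -1$ with $p+p'\le N$, the Hankel matrix $H_{p,p'}(x)$ is the $(p+1)\times(p'+1)$ matrix $(x_{i+j})_{0\le i\le p,\,0\le j\le p'}$. *)

(* Defs.v *)
From mathcomp Require Import all_boot all_algebra.
Set Implicit Arguments. Unset Strict Implicit. Unset Printing Implicit Defensive.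
Import GRing.Theory.
Local Open Scope ring_scope.

(* Hankel matrix H_{p,p'}(x) = (x_{i+j})_{0<=i<=p, 0<=j<=p'} for
   x = (x_0,...,x_u) in F^{u+1}, indexed by 'I_u.+1.  The index i+j is
   converted with inord; it is only meaningful (and only used) when p+p' <= u. *)
Definition hankel (F : fieldType) (u : nat) (x : 'I_u.+1 -> F) (p q : nat)
  : 'M[F]_(p.+1, q.+1) :=
  \matrix_(i < p.+1, j < q.+1) x (inord (i + j)).

(* Main.v *)
Require Import Defs.
From mathcomp Require Import all_boot all_algebra.
From mathcomp Require Import zify.
Set Implicit Arguments. Unset Strict Implicit. Unset Printing Implicit Defensive.
Import GRing.Theory.
Local Open Scope ring_scope.

Section S.
Variable F : fieldType.

Lemma sum_delta n (f : 'I_n.+1 -> F) (j : nat) :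
  \sum_(k < n.+1) f k * ((k : nat) == j)%:R = if (j < n.+1)%N then f (inord j) else 0.
Proof.
case: ifP => hj.
  rewrite (bigD1 (inord j)) //= inordK // eqxx mulr1 big1 ?addr0 // => k hk.
  case: eqP => e; last by rewrite mulr0.
  by case/eqP: hk; apply: val_inj; rewrite /= inordK // e.
rewrite big1 // => k _; case: eqP => e; last by rewrite mulr0.
by move: (ltn_ord k); rewrite e hj.
Qed.

Definition Z0 p : 'M[F]_(p.+1, p.+2) := \matrix_(i, j) ((i : nat) == j)%:R.
Definition Z1 p : 'M[F]_(p.+1, p.+2) := \matrix_(i, j) (((i : nat).+1) == j)%:R.

Lemma Z0E p m (A : 'M[F]_(m, p.+1)) r (j : 'I_p.+2) :
  (A *m Z0 p) r j = if (j < p.+1)%N then A r (inord j) else 0.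
Proof. by rewrite mxE -sum_delta; apply: eq_bigr => k _; rewrite mxE. Qed.

Lemma Z1E p m (A : 'M[F]_(m, p.+1)) r (j : 'I_p.+2) :
  (A *m Z1 p) r j = if (j : nat) is j'.+1 then A r (inord j') else 0.
Proof.
rewrite mxE; case: j => [[|j] hj] /=.
  by rewrite big1 // => k _; rewrite mxE mulr0.
have hj' : (j < p.+1)%N by rewrite -ltnS.
rewrite (eq_bigr (fun k => A r k * ((k : nat) == j)%:R)).
  by rewrite sum_delta hj'.
by move=> k _; rewrite mxE eqSS.
Qed.

Variable u : nat.
Variable x : 'I_u.+1 -> F.

Lemma tr_hankel p q : (hankel x p q)^T = hankel x q p.
Proof. by apply/matrixP => i j; rewrite !mxE addnC. Qed.

Lemma step p q : (\rank (hankel x p q.+1) <= p)%N ->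
  (\rank (hankel x p.+1 q) <= \rank (hankel x p q.+1))%N.
Proof.
move=> hr.
set G := hankel x p q.+1; set G2 := hankel x p.+1 q.
set K := kermx G.
have KG : K *m G = 0 by apply: mulmx_ker.
have hA : (K *m Z0 p <= kermx G2)%MS.
  rewrite sub_kermx; apply/eqP/matrixP => r j; rewrite !mxE.
  rewrite big_ord_recr /= Z0E ltnn mul0r addr0.
  transitivity ((K *m G) r (widen_ord (leqnSn _) j)); last by rewrite KG mxE.
  rewrite mxE; apply: eq_bigr => k _.
  by rewrite Z0E /= ltn_ord !mxE /= inord_val.
have hB : (K *m Z1 p <= kermx G2)%MS.
  rewrite sub_kermx; apply/eqP/matrixP => r j; rewrite !mxE.
  rewrite big_ord_recl /= Z1E mul0r add0r.
  transitivity ((K *m G) r (lift ord0 j)); last by rewrite KG mxE.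
  rewrite mxE; apply: eq_bigr => k _.
  by rewrite Z1E /= !mxE /= inord_val /bump /= add1n addSnnS.
have rkA : \rank (K *m Z0 p) = \rank K.
  apply/eqP; rewrite eqn_leq mxrankM_maxl /=.
  have e : K *m Z0 p *m (Z0 p)^T = K.
    apply/matrixP => r j; rewrite [LHS]mxE.
    rewrite (eq_bigr (fun k => (K *m Z0 p) r k * ((k : nat) == j)%:R)).
      by rewrite sum_delta (leqW (ltn_ord j)) Z0E inordK ?(leqW (ltn_ord j)) // ltn_ord inord_val.
    by move=> k _; rewrite !mxE eq_sym.
  by rewrite -[X in (\rank X <= _)%N]e mxrankM_maxl.
have nBA : ~~ (K *m Z1 p <= K *m Z0 p)%MS.
  apply/negP => /submxP [D hD].
  have H0 : forall k r (i : 'I_p.+1), (i + k)%N = p -> K r i = 0.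
    elim=> [|k IH] r i hi.
      have := congr1 (fun M : 'M[F]_(_, _) => M r ord_max) hD.
      rewrite Z1E mulmxA Z0E ltnn /= => <-.
      by congr (K r _); apply: val_inj; rewrite /= inordK //; lia.
    have hi1 : (i.+1 < p.+2)%N by lia.
    have := congr1 (fun M : 'M[F]_(_, _) => M r (Ordinal hi1)) hD.
    rewrite Z1E mulmxA Z0E /= ltnS.
    have -> : (i < p)%N by lia.
    rewrite inord_val => ->; rewrite mxE big1 // => s _.
    by rewrite IH ?mulr0 // inordK; lia.
  have K0 : K = 0.
    apply/matrixP => r i; rewrite [RHS]mxE; apply: (H0 (p - i)%N); have := ltn_ord i; lia.
  have := mxrank_ker G; rewrite -/K K0 mxrank0. move: hr; rewrite -/G; lia.
have hlt : (\rank K < \rank (K *m Z0 p + K *m Z1 p)%MS)%N.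
  rewrite -rkA ltn_neqAle; have := mxrank_leqif_sup (addsmxSl (K *m Z0 p) (K *m Z1 p)).
  move=> [-> ->]; rewrite andbT; apply: contra nBA => hs.
  exact: submx_trans (addsmxSr _ _) hs.
have hs : (K *m Z0 p + K *m Z1 p <= kermx G2)%MS by rewrite addsmx_sub hA hB.
have := mxrankS hs.
rewrite mxrank_ker.
have := mxrank_ker G; rewrite -/K => e.
have := rank_leq_row G2; have := rank_leq_row G.
lia.
Qed.

Lemma step' p q : (\rank (hankel x p.+1 q) <= q)%N ->
  (\rank (hankel x p q.+1) <= \rank (hankel x p.+1 q))%N.
Proof.
rewrite -(mxrank_tr (hankel x p.+1 q)) -(mxrank_tr (hankel x p q.+1)) !tr_hankel.
exact: step.
Qed.
End S.

Theorem lemma11 (F : fieldType) (u m n r : nat) (x : 'I_u.+1 -> F) :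
  (m + n <= u)%N -> (r <= m)%N -> (r <= n)%N ->
  (\rank (hankel x m n) <= r)%N <-> (\rank (hankel x r (m + n - r)) <= r)%N.
Proof.
move=> _ hrm hrn.
have main : forall d m n, m = (r + d)%N -> (r <= n)%N ->
  (\rank (hankel x m n) <= r)%N <-> (\rank (hankel x r (n + d)) <= r)%N.
  elim=> [|d IH] m' n' -> hn; first by rewrite !addn0.
  rewrite !addnS -[(n' + d).+1]addSn.
  have := IH (r + d)%N n'.+1 erefl (leqW hn) => -[h1 h2].
  split => h.
    apply: h1; have := @step' _ _ x (r + d) n'; lia.
  have h3 := h2 h.
  have := @step _ _ x (r + d) n'; lia.
have -> : (m + n - r = n + (m - r))%N by lia.
by apply: main; lia.
Qed.
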